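(* Let $\pi\in RC(n)$. (1) If $n\ge 3$ is odd and $\pi$ is alternating, then $\{\pi_1,\pi_n\}=\{\frac{n-1}{2},\frac{n+1}{2}\}$, $\{\pi_j : 1<j<n,\ j\text{ odd}\}=\{1,\dots,\frac{n-3}{2}\}$, and $\{\pi_j: 1<j<n,\ j\text{ even}\}=\{\frac{n+3}{2},\dots,n\}$. (2) If $n\ge 3$ is odd and $\pi$ is reverse-alternating, then $\{\pi_1,\pi_n\}=\{\frac{n+1}{2},\frac{n+3}{2}\}$, $\{\pi_j: 1<j<n,\ j\text{ odd}\}=\{\frac{n+5}{2},\dots,n\}$, and $\{\pi_j: 1<j<n,\ j\text{ even}\}=\{1,\dots,\frac{n-1}{2}\}$. (3) If $n\ge 2$ is even and $\pi$ is alternating, then $\{\pi_1,\pi_n\}=\{\frac n2,\frac n2+1\}$, $\{\pi_j: 1<j<n,\ j\text{ odd}\}=\{1,\dots,\frac n2-1\}$, and $\{\pi_j: 1<j<n,\ j\text{ even}\}=\{\frac n2+2,\dots,n\}$. (4) If $n\ge 2$ is even and $\pi$ is reverse-alternating, then $\{\pi_1,\pi_n\}=\{\frac n2,\frac n2+1\}$, $\{\pi_j: 1<j<n,\ j\text{ odd}\}=\{\frac n2+2,\dots,n\}$, and $\{\pi_j: 1<j<n,\ j\text{ even}\}=\{1,\dots,\frac n2-1\}$. (Here $\{a,\dots,b\}$ with $a>b$ denotes the empty set.)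
   Context: Permutations of $[n]=\{1,\dots,n\}$ are written in one-line notation $\pi=(\pi_1,\dots,\pi_n)$; $S_n$ is the set of all of them. $\pi$ is alternating if $\pi_1<\pi_2>\pi_3<\cdots$ and reverse-alternating if $\pi_1>\pi_2<\pi_3>\cdots$. For a sequence $\tau=(\tau_1,\dots,\tau_m)$ of distinct numbers with $m\ge 2$, let $i(\tau)$ be the number of maximal increasing runs of consecutive entries of length at least $2$, and $d(\tau)$ the number of maximal decreasing runs of consecutive entries of length at least $2$; set $id(\tau)=i(\tau)+d(\tau)$. Equivalently, $id(\tau)=1+\#\{k: 2\le k\le m-1,\ (\tau_k-\tau_{k-1})(\tau_{k+1}-\tau_k)<0\}$. For $\pi\in S_n$, let $X(\pi)$ be the collection of all subsequences $\tau=(\pi_{j_1},\dots,\pi_{j_m})$ with $j_1<\dots<j_m$ and $m\ge 3$, and $t(\pi)=\sum_{\tau\in X(\pi)} id(\tau)$. Define $RC(n)=\{\pi\in S_n : t(\pi)=\max_{\sigma\in S_n} t(\sigma)\}$. *)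

(* Defs.v *)
From mathcomp Require Import all_boot.
Set Implicit Arguments. Unset Strict Implicit. Unset Printing Implicit Defensive.

Definition is_perm (n : nat) (s : seq nat) : bool := perm_eq s (iota 1 n).

Definition turn (a b c : nat) : bool :=
  ((a < b) && (c < b)) || ((b < a) && (b < c)).

(* id(tau) = 1 + #{k : 2 <= k <= m-1 (1-based), tau_k is a peak or valley};
   here with 0-based index k ranging over 1 .. m-2 *)
Definition idf (tau : seq nat) : nat :=
  1 + \sum_(1 <= k < (size tau).-1)
        turn (nth 0 tau k.-1) (nth 0 tau k) (nth 0 tau k.+1).

(* t(pi) = sum of id(tau) over all subsequences tau of pi of length >= 3;
   subsequences are indexed by selection masks (index sets j_1<...<j_m). *)
Definition tval (s : seq nat) : nat :=
  \sum_(m : (size s).-tuple bool | 3 <= size (mask m s)) idf (mask m s).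

Definition inRC (n : nat) (s : seq nat) : Prop :=
  is_perm n s /\ forall sigma, is_perm n sigma -> tval sigma <= tval s.

(* pi_1 < pi_2 > pi_3 < ... (0-based: position k even => ascent) *)
Definition alternating (s : seq nat) : bool :=
  all (fun k => if odd k then nth 0 s k.+1 < nth 0 s k
                else nth 0 s k < nth 0 s k.+1) (iota 0 (size s).-1).

Definition reverse_alternating (s : seq nat) : bool :=
  all (fun k => if odd k then nth 0 s k < nth 0 s k.+1
                else nth 0 s k.+1 < nth 0 s k) (iota 0 (size s).-1).

Definition range (a b : nat) : seq nat := iota a (b.+1 - a).

Definition pij (s : seq nat) (j : nat) : nat := nth 0 s j.-1.

Definition ends (n : nat) (s : seq nat) : seq nat := [:: pij s 1; pij s n].

Definition inner_odd (n : nat) (s : seq nat) : seq nat :=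
  [seq pij s j | j <- iota 2 (n - 2) & odd j].
Definition inner_even (n : nat) (s : seq nat) : seq nat :=
  [seq pij s j | j <- iota 2 (n - 2) & ~~ odd j].

(* Main.v *)
Require Import Defs.
From mathcomp Require Import all_boot zify.
Set Implicit Arguments. Unset Strict Implicit. Unset Printing Implicit Defensive.

Fixpoint bits n : seq (seq bool) :=
  if n is n'.+1 then [seq true :: b | b <- bits n'] ++ [seq false :: b | b <- bits n']
  else [:: [::]].

Lemma mem_bits n b : (b \in bits n) = (size b == n).
Proof.
elim: n b => [|n IH] [|c b] //=.
- rewrite mem_cat; apply/negP => /orP [] /mapP [? _] //.
- rewrite mem_cat eqSS -IH.
  have Ht : (true :: b \in [seq true :: b0 | b0 <- bits n]) = (b \in bits n).
    by apply: mem_map => ? ? [].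
  have Hf : (false :: b \in [seq false :: b0 | b0 <- bits n]) = (b \in bits n).
    by apply: mem_map => ? ? [].
  have Ht' : (true :: b \in [seq false :: b0 | b0 <- bits n]) = false.
    by apply/negP => /mapP [? _].
  have Hf' : (false :: b \in [seq true :: b0 | b0 <- bits n]) = false.
    by apply/negP => /mapP [? _].
  by case: c; rewrite ?Ht ?Hf ?Ht' ?Hf' ?orbF.
Qed.

Lemma uniq_bits n : uniq (bits n).
Proof.
elim: n => [|n IH] //=.
rewrite cat_uniq !map_inj_uniq ?IH //=; try by move=> ? ? [].
rewrite andbT; apply/hasPn => ? /mapP [? _ ->]; apply/negP => /mapP [? _] //.
Qed.

Lemma tuple_sum n (F : seq bool -> nat) :
  \sum_(m : n.-tuple bool) F m = \sum_(b <- bits n) F b.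
Proof.
rewrite -big_enum -(big_map val xpredT F).
apply: perm_big; apply: uniq_perm.
- rewrite map_inj_uniq ?enum_uniq //; exact: val_inj.
- exact: uniq_bits.
move=> b; rewrite mem_bits; apply/mapP/idP.
- by move=> [t _ ->]; rewrite size_tuple.
- move=> /eqP H; exists (Tuple (introT eqP H)) => //; by rewrite mem_enum.
Qed.

Definition turnsf (f : nat -> nat -> nat -> nat) (t : seq nat) : nat :=
  \sum_(1 <= k < (size t).-1) f (nth 0 t k.-1) (nth 0 t k) (nth 0 t k.+1).

Definition fturn a b c : nat := turn a b c.

Lemma tval_bits (s : seq nat) : Defs.tval s =
  \sum_(b <- bits (size s)) (3 <= count id b) + \sum_(b <- bits (size s)) turnsf fturn (mask b s).
Proof.
rewrite /Defs.tval big_mkcond /= (tuple_sum _ (fun b => if 3 <= size (mask b s) then idf (mask b s) else 0)) -big_split /=.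
rewrite big_seq [RHS]big_seq; apply: eq_bigr => b Hb.
move: Hb; rewrite mem_bits => /eqP Hb.
rewrite size_mask // /idf.
case: ifP => H3; first by [].
rewrite /turnsf big_geq //. rewrite size_mask //; lia.
Qed.

Lemma turns_cons f c t : turnsf f (c :: t) =
  turnsf f t + (if t is a :: d :: _ then f c a d else 0).
Proof.
case: t => [|a [|d t]]; rewrite /turnsf /=; first by rewrite !big_geq.
  by rewrite !big_geq.
rewrite big_ltn //= addnC; congr (_ + _).
rewrite big_add1 /=; apply: eq_big_nat => i /andP [Hi _]; by case: i Hi.
Qed.

Lemma big_bits_S n (F : seq bool -> nat) : \sum_(b <- bits n.+1) F b =
  \sum_(b <- bits n) F (true :: b) + \sum_(b <- bits n) F (false :: b).
Proof. by rewrite /= big_cat !big_map. Qed.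

Lemma big_bits_const n c : \sum_(b <- bits n) c = c * 2 ^ n.
Proof.
elim: n => [|n IH]; first by rewrite big_seq1 muln1.
by rewrite big_bits_S IH expnS; lia.
Qed.

Lemma bump0 i : bump 0 i = i.+1.
Proof. by rewrite /bump leq0n add1n. Qed.
Lemma pw n k : 2 ^ (n - k.+1) = 2 ^ (n.-1 - k).
Proof. congr (2 ^ _); lia. Qed.

Lemma L1 (g : nat -> nat) (s : seq nat) :
  \sum_(b <- bits (size s)) (if mask b s is a :: _ then g a else 0) =
  \sum_(k < size s) g (nth 0 s k) * 2 ^ ((size s).-1 - k).
Proof.
elim: s => [|c s IH]; first by rewrite big_seq1 big_ord0.
rewrite /= big_bits_S /= IH big_bits_const big_ord_recl /= subn0; congr (_ + _).
by apply: eq_bigr => k _; rewrite add0n bump0 pw.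
Qed.

Lemma L2 (g : nat -> nat -> nat) (s : seq nat) :
  \sum_(b <- bits (size s)) (if mask b s is a :: d :: _ then g a d else 0) =
  \sum_(j < size s) \sum_(k < size s) (j < k) * (g (nth 0 s j) (nth 0 s k) * 2 ^ ((size s).-1 - k)).
Proof.
elim: s => [|c s IH]; first by rewrite big_seq1 big_ord0.
rewrite /= big_bits_S /= IH.
have -> : \sum_(b <- bits (size s)) (if mask b s is a :: _ then g c a else 0) =
  \sum_(k < size s) g c (nth 0 s k) * 2 ^ ((size s).-1 - k).
  by rewrite -(L1 (g c)); apply: eq_bigr => b _; case: (mask b s).
rewrite big_ord_recl /= big_ord_recl /= mul0n add0n; congr (_ + _).
  by apply: eq_bigr => k _; rewrite bump0 pw mul1n.
apply: eq_bigr => j _; rewrite big_ord_recl /= mul0n add0n.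
by apply: eq_bigr => k _; rewrite !bump0 ltnS pw.
Qed.

Definition W (f : nat -> nat -> nat -> nat) (s : seq nat) : nat :=
  \sum_(i < size s) \sum_(j < size s) \sum_(k < size s)
    ((i < j) && (j < k)) * (f (nth 0 s i) (nth 0 s j) (nth 0 s k) * (2 ^ i * 2 ^ ((size s).-1 - k))).

Lemma L3 f (s : seq nat) :
  \sum_(b <- bits (size s)) turnsf f (mask b s) = W f s.
Proof.
rewrite /W; elim: s => [|c s IH]; first by rewrite big_seq1 big_ord0 /turnsf big_geq.
rewrite /= big_bits_S /=.
under eq_bigr do rewrite turns_cons.
rewrite big_split /= IH.
have -> : \sum_(b <- bits (size s)) (if mask b s is a :: d :: _ then f c a d else 0) =
  \sum_(j < size s) \sum_(k < size s) (j < k) * (f c (nth 0 s j) (nth 0 s k) * 2 ^ ((size s).-1 - k)).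
  by rewrite -(L2 (f c)).
rewrite big_ord_recl /=.
have -> : \sum_(i < size s) \sum_(j < (size s).+1) \sum_(k < (size s).+1)
    ((bump 0 i < j) && (j < k)) * (f (nth 0 s (0 + i)) (nth 0 (c :: s) j) (nth 0 (c :: s) k) *
      (2 ^ bump 0 i * 2 ^ (size s - k))) = W f s + W f s.
  rewrite /W -big_split /=; apply: eq_bigr => i _.
  rewrite big_ord_recl /= big1 ?add0n; last by move=> k _; rewrite bump0.
  rewrite -big_split /=; apply: eq_bigr => j _.
  rewrite big_ord_recl /= !bump0 andbF mul0n add0n -big_split /=; apply: eq_bigr => k _.
  rewrite !bump0 !ltnS !add0n expnS pw; nia.
have -> : \sum_(j < (size s).+1) \sum_(k < (size s).+1) ((0 < j) && (j < k)) *
        (f c (nth 0 (c :: s) j) (nth 0 (c :: s) k) * (2 ^ 0 * 2 ^ (size s - k))) =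
   \sum_(j < size s) \sum_(k < size s) (j < k) * (f c (nth 0 s j) (nth 0 s k) * 2 ^ ((size s).-1 - k)).
  rewrite big_ord_recl /= big1 ?add0n; last by move=> k _.
  apply: eq_bigr => j _.
  rewrite big_ord_recl /= !bump0 /= mul0n add0n; apply: eq_bigr => k _.
  by rewrite !bump0 ltnS mul1n pw !add0n.
by rewrite /W -[LHS]addnA [LHS]addnC -[LHS]addnA.
Qed.

Definition hsw x v := if v == x then x.+1 else if v == x.+1 then x else v.

Lemma ltn_hsw x u v : ~~ ((u == x) && (v == x.+1)) -> ~~ ((u == x.+1) && (v == x)) ->
  (hsw x u < hsw x v) = (u < v).
Proof. rewrite /hsw; repeat case: ifP => /eqP ?; lia. Qed.

Lemma hswK x : involutive (hsw x).
Proof.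
move=> v; rewrite /hsw.
have [->|h1] := eqVneq v x.
  by rewrite eqxx (_ : (x.+1 == x) = false) ?eqxx //; lia.
have [->|h2] := eqVneq v x.+1; first by rewrite eqxx.
by rewrite (negbTE h1) (negbTE h2).
Qed.

Definition pairok x u v := ~~ ((u == x) && (v == x.+1)) && ~~ ((u == x.+1) && (v == x)).

Lemma turn_hsw x a b c : pairok x a b -> pairok x c b ->
  turn (hsw x a) (hsw x b) (hsw x c) = turn a b c.
Proof.
move=> /andP [h1 h2] /andP [h3 h4]; rewrite /turn !ltn_hsw //; lia.
Qed.

Lemma W_map f h (s : seq nat) : W f (map h s) = W (fun a b c => f (h a) (h b) (h c)) s.
Proof.
rewrite /W size_map; apply: eq_bigr => i _; apply: eq_bigr => j _; apply: eq_bigr => k _.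
by rewrite !(nth_map 0).
Qed.

Lemma sum_pick n p (G : nat -> nat) : p < n -> \sum_(j < n) (j == p :> nat) * G j = G p.
Proof.
move=> Hp; rewrite (bigD1 (Ordinal Hp)) //= eqxx mul1n big1 ?addn0 // => j Hj.
have -> : (nat_of_ord j == p) = false.
  apply/negP => /eqP E; move/negP: Hj; apply; apply/eqP; exact: val_inj.
by rewrite mul0n.
Qed.

Lemma geoL m : \sum_(i < m) 2 ^ i + 1 = 2 ^ m.
Proof.
elim: m => [|m IH]; first by rewrite big_ord0.
by rewrite big_ord_recr /= expnS addnAC IH mul2n addnn.
Qed.

Lemma geoR n m : m < n -> \sum_(k < n) (m < k) * 2 ^ (n.-1 - k) + 1 = 2 ^ (n.-1 - m).
Proof.
elim: n => [//|n IH] Hm.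
rewrite big_ord_recr /= subnn expn0 muln1.
case: (ltngtP m n) => Hmn.
- have E : n - m = (n.-1 - m).+1 by lia.
  rewrite E expnS -IH //.
  have -> : \sum_(i < n) (m < i) * 2 ^ (n - i) = 2 * \sum_(k < n) (m < k) * 2 ^ (n.-1 - k).
    rewrite big_distrr /=; apply: eq_bigr => k _.
    have -> : n - k = (n.-1 - k).+1 by have := ltn_ord k; lia.
    rewrite expnS; lia.
  move: (\sum_(k < n) _) => S; lia.
- lia.
- subst m; rewrite big1 ?subnn // => k _.
  by have -> : (n < k) = false by have := ltn_ord k; lia.
Qed.

Definition spc p q (i j k : nat) := ((j == p) && (k == q)) || ((i == p) && (j == q)).

Definition Rrest f (s : seq nat) p q :=
  \sum_(i < size s) \sum_(j < size s) \sum_(k < size s)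
    ((i < j) && (j < k) && ~~ spc p q i j k) *
      (f (nth 0 s i) (nth 0 s j) (nth 0 s k) * (2 ^ i * 2 ^ ((size s).-1 - k))).

Definition Lp f (s : seq nat) p q :=
  \sum_(i < size s) (i < p) * (f (nth 0 s i) (nth 0 s p) (nth 0 s q) * (2 ^ i * 2 ^ ((size s).-1 - q))).

Definition Rp f (s : seq nat) p q :=
  \sum_(k < size s) (q < k) * (f (nth 0 s p) (nth 0 s q) (nth 0 s k) * (2 ^ p * 2 ^ ((size s).-1 - k))).

Lemma sum3_split n (F G H : nat -> nat -> nat -> nat) :
  \sum_(i < n) \sum_(j < n) \sum_(k < n) (F i j k + G i j k + H i j k) =
  \sum_(i < n) \sum_(j < n) \sum_(k < n) F i j k + \sum_(i < n) \sum_(j < n) \sum_(k < n) G i j k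
  + \sum_(i < n) \sum_(j < n) \sum_(k < n) H i j k.
Proof.
rewrite -!big_split; apply: eq_bigr => i _; rewrite -!big_split; apply: eq_bigr => j _.
by rewrite -!big_split.
Qed.

Lemma sum2_pick n p q (G : nat -> nat -> nat) : p < n -> q < n ->
  \sum_(j < n) \sum_(k < n) (j == p :> nat) * ((k == q :> nat) * G j k) = G p q.
Proof.
move=> Hp Hq.
rewrite (eq_bigr (fun j : 'I_n => (j == p :> nat) * \sum_(k < n) (k == q :> nat) * G j k)).
  by rewrite (sum_pick (fun j => \sum_(k < n) (k == q :> nat) * G j k)) // sum_pick.
by move=> j _; rewrite big_distrr.
Qed.

Lemma sum3_pick n p q (G : nat -> nat -> nat -> nat) : p < n -> q < n ->
  \sum_(i < n) \sum_(j < n) \sum_(k < n) (i == p :> nat) * ((j == q :> nat) * G i j k) =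
  \sum_(k < n) G p q k.
Proof.
move=> Hp Hq.
rewrite (eq_bigr (fun i : 'I_n => \sum_(j < n) (i == p :> nat) * ((j == q :> nat) * \sum_(k < n) G i j k))).
  by rewrite (sum2_pick (fun i j => \sum_(k < n) G i j k)).
by move=> i _; apply: eq_bigr => j _; rewrite !big_distrr.
Qed.

Lemma W_split f (s : seq nat) p q : p < q -> q < size s ->
  W f s = Rrest f s p q + Lp f s p q + Rp f s p q.
Proof.
move=> Hpq Hq; have Hp : p < size s by lia.
rewrite /W /Rrest /Lp /Rp.
set T := fun i j k : nat => f (nth 0 s i) (nth 0 s j) (nth 0 s k) * (2 ^ i * 2 ^ ((size s).-1 - k)).
have E : forall i j k : nat, ((i < j) && (j < k)) * T i j k =
   ((i < j) && (j < k) && ~~ spc p q i j k) * T i j k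
   + (j == p) * ((k == q) * ((i < p) * T i j k))
   + (i == p) * ((j == q) * ((q < k) * T i j k)).
  move=> i j k; rewrite !mulnA -!mulnDl; congr (_ * _); rewrite /spc; lia.
rewrite (eq_bigr (fun i : 'I_(size s) => \sum_(j < size s) \sum_(k < size s)
   (((i < j) && (j < k) && ~~ spc p q i j k) * T i j k
   + (j == p :> nat) * ((k == q :> nat) * ((i < p) * T i j k))
   + (i == p :> nat) * ((j == q :> nat) * ((q < k) * T i j k))))); last first.
  move=> i _; apply: eq_bigr => j _; apply: eq_bigr => k _; exact: E.
rewrite (@sum3_split (size s) (fun i j k => ((i < j) && (j < k) && ~~ spc p q i j k) * T i j k)
  (fun i j k => (j == p) * ((k == q) * ((i < p) * T i j k)))
  (fun i j k => (i == p) * ((j == q) * ((q < k) * T i j k)))).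
congr (_ + _ + _).
- apply: eq_bigr => i _.
  by rewrite (sum2_pick (fun j k => (i < p) * T i j k)).
- by rewrite (sum3_pick (fun i j k => (q < k) * T i j k)).
Qed.

Lemma dom_lt n m (Pr : nat -> bool) (a b w : nat -> nat) : m < n -> ~~ Pr m ->
  (forall i, a i <= 1) -> a m = 0 -> b m = 1 ->
  \sum_(i < n) Pr i * w i < w m ->
  \sum_(i < n) (Pr i || (i == m :> nat)) * (a i * w i) < \sum_(i < n) (Pr i || (i == m :> nat)) * (b i * w i).
Proof.
move=> Hm HPm Ha Ham Hbm Hs.
have E : forall c : nat -> nat, \sum_(i < n) (Pr i || (i == m :> nat)) * (c i * w i) =
   \sum_(i < n) Pr i * (c i * w i) + c m * w m.
  move=> c; rewrite -(sum_pick (fun i => c i * w i) Hm) -big_split /=.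
  apply: eq_bigr => i _; case: (boolP (Pr i)) => HP; case: (nat_of_ord i =P m) => Him //=.
  - by subst m; rewrite HP in HPm.
  - by rewrite mul0n addn0.
rewrite !E Ham Hbm mul0n addn0 mul1n.
apply: leq_ltn_trans (leq_trans _ (leq_addl _ _)); last exact: Hs.
apply: leq_sum => i _; have := Ha i; case: (Pr i) => //=; rewrite !mul1n => H.
by rewrite -[X in _ <= X]mul1n leq_mul2r H orbT.
Qed.

Lemma sum_narrow n m (F : nat -> nat) : m <= n ->
  \sum_(i < n) (i < m) * F i = \sum_(i < m) F i.
Proof.
move=> Hmn; rewrite (big_ord_widen n F Hmn) [RHS]big_mkcond /=.
by apply: eq_bigr => i _; case: (i < m); rewrite ?mul1n ?mul0n.
Qed.

Lemma Lp_lt g g' (s : seq nat) p q : 0 < p -> p < q -> q < size s ->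
  (forall a b c, g a b c <= 1) ->
  g (nth 0 s p.-1) (nth 0 s p) (nth 0 s q) = 0 ->
  g' (nth 0 s p.-1) (nth 0 s p) (nth 0 s q) = 1 ->
  Lp g s p q < Lp g' s p q.
Proof.
move=> Hp Hpq Hq Hg H0 H1.
have Ep : forall i : nat, (i < p) = ((i < p.-1) || (i == p.-1)) by move=> i; lia.
have X : forall h, Lp h s p q = \sum_(i < size s) ((i < p.-1) || (i == p.-1 :> nat)) *
   (h (nth 0 s i) (nth 0 s p) (nth 0 s q) * (2 ^ i * 2 ^ ((size s).-1 - q))).
  by move=> h; rewrite /Lp; apply: eq_bigr => i _; rewrite Ep.
rewrite !X.
apply: (dom_lt (Pr := fun i => i < p.-1) (a := fun i => g (nth 0 s i) (nth 0 s p) (nth 0 s q))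
  (b := fun i => g' (nth 0 s i) (nth 0 s p) (nth 0 s q))
  (w := fun i => 2 ^ i * 2 ^ ((size s).-1 - q))) => //=.
- lia.
- by rewrite ltnn.
- rewrite (sum_narrow (fun i => 2 ^ i * 2 ^ ((size s).-1 - q))); last lia.
  rewrite -big_distrl /= ltn_mul2r expn_gt0 /= -(geoL p.-1); by rewrite addn1 ltnSn.
Qed.

Lemma Rp_lt g g' (s : seq nat) p q : p < q -> q.+1 < size s ->
  (forall a b c, g a b c <= 1) ->
  g (nth 0 s p) (nth 0 s q) (nth 0 s q.+1) = 0 ->
  g' (nth 0 s p) (nth 0 s q) (nth 0 s q.+1) = 1 ->
  Rp g s p q < Rp g' s p q.
Proof.
move=> Hpq Hq Hg H0 H1.
have Ep : forall i : nat, (q < i) = ((q.+1 < i) || (i == q.+1)) by move=> i; lia.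
have X : forall h, Rp h s p q = \sum_(i < size s) ((q.+1 < i) || (i == q.+1 :> nat)) *
   (h (nth 0 s p) (nth 0 s q) (nth 0 s i) * (2 ^ p * 2 ^ ((size s).-1 - i))).
  by move=> h; rewrite /Rp; apply: eq_bigr => i _; rewrite Ep.
rewrite !X.
apply: (dom_lt (Pr := fun i => q.+1 < i) (a := fun i => g (nth 0 s p) (nth 0 s q) (nth 0 s i))
  (b := fun i => g' (nth 0 s p) (nth 0 s q) (nth 0 s i))
  (w := fun i => 2 ^ p * 2 ^ ((size s).-1 - i))) => //=.
- by rewrite ltnn.
- under eq_bigr do rewrite mulnCA.
  rewrite -big_distrr /= ltn_mul2l expn_gt0 /= -(geoR Hq); by rewrite addn1 ltnSn.
Qed.

Lemma Lp0 g (s : seq nat) q : Lp g s 0 q = 0.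
Proof. by rewrite /Lp big1. Qed.

Lemma Rp0 g (s : seq nat) p q : q.+1 = size s -> Rp g s p q = 0.
Proof. move=> E; rewrite /Rp big1 // => k _; have := ltn_ord k => H.
by have -> : (q < k) = false by lia. Qed.

Definition fturnh x a b c := fturn (hsw x a) (hsw x b) (hsw x c).

Lemma nth_inj (s : seq nat) u v : uniq s -> u < size s -> v < size s ->
  nth 0 s u = nth 0 s v -> u = v.
Proof. by move=> Us Hu Hv /eqP; rewrite nth_uniq // => /eqP. Qed.

Lemma Rrest_eq x (s : seq nat) p q : uniq s -> p < q -> q < size s ->
  (nth 0 s p = x /\ nth 0 s q = x.+1) \/ (nth 0 s p = x.+1 /\ nth 0 s q = x) ->
  Rrest (fturnh x) s p q = Rrest fturn s p q.
Proof.
move=> Us Hpq Hq Hv; have Hp : p < size s by lia.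
apply: eq_bigr => i _; apply: eq_bigr => j _; apply: eq_bigr => k _.
case: (boolP ((i < j) && (j < k) && ~~ spc p q i j k)) => H; last by rewrite !mul0n.
congr (_ * (_ * _)); rewrite /fturnh /fturn turn_hsw //.
- have Hip := @nth_inj s i p Us (ltn_ord i) Hp.
  have Hiq := @nth_inj s i q Us (ltn_ord i) Hq.
  have Hjp := @nth_inj s j p Us (ltn_ord j) Hp.
  have Hjq := @nth_inj s j q Us (ltn_ord j) Hq.
  move: H; rewrite /spc /pairok => H.
  apply/andP; split; apply/negP => /andP [/eqP E1 /eqP E2]; lia.
- have Hkp := @nth_inj s k p Us (ltn_ord k) Hp.
  have Hkq := @nth_inj s k q Us (ltn_ord k) Hq.
  have Hjp := @nth_inj s j p Us (ltn_ord j) Hp.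
  have Hjq := @nth_inj s j q Us (ltn_ord j) Hq.
  move: H; rewrite /spc /pairok => H.
  apply/andP; split; apply/negP => /andP [/eqP E1 /eqP E2]; lia.
Qed.

Lemma fturn_le1 a b c : fturn a b c <= 1.
Proof. by rewrite /fturn; case: turn. Qed.

Lemma tval_swap x (s : seq nat) p q : uniq s -> p < q -> q < size s ->
  (nth 0 s p = x /\ nth 0 s q = x.+1) \/ (nth 0 s p = x.+1 /\ nth 0 s q = x) ->
  (p = 0 \/ (fturn (nth 0 s p.-1) (nth 0 s p) (nth 0 s q) = 0 /\
             fturnh x (nth 0 s p.-1) (nth 0 s p) (nth 0 s q) = 1)) ->
  (q.+1 = size s \/ (fturn (nth 0 s p) (nth 0 s q) (nth 0 s q.+1) = 0 /\
             fturnh x (nth 0 s p) (nth 0 s q) (nth 0 s q.+1) = 1)) ->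
  (0 < p \/ q.+1 < size s) ->
  Defs.tval s < Defs.tval (map (hsw x) s).
Proof.
move=> Us Hpq Hq Hv HL HR Hor.
rewrite !tval_bits !L3 size_map W_map ltn_add2l.
have -> : W (fun a b c => fturn (hsw x a) (hsw x b) (hsw x c)) s = W (fturnh x) s by [].
rewrite !(W_split _ Hpq Hq) (Rrest_eq Us Hpq Hq Hv) -!addnA ltn_add2l.
have HLe : Lp fturn s p q <= Lp (fturnh x) s p q /\ (0 < p -> Lp fturn s p q < Lp (fturnh x) s p q).
  case: (posnP p) => Hp0.
    by subst p; rewrite !Lp0.
  case: HL => [|[HL0 HL1]]; first lia.
  have H1 : Lp fturn s p q < Lp (fturnh x) s p q.
    by apply: Lp_lt => //; exact: fturn_le1.
  by split => //; apply: ltnW.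
have HRe : Rp fturn s p q <= Rp (fturnh x) s p q /\ (q.+1 < size s -> Rp fturn s p q < Rp (fturnh x) s p q).
  case: (ltngtP q.+1 (size s)) => Hq0; last 1 first.
    by rewrite !(Rp0 _ _ Hq0).
    2: lia.
  case: HR => [|[HR0 HR1]]; first lia.
  have H1 : Rp fturn s p q < Rp (fturnh x) s p q.
    by apply: Rp_lt => //; exact: fturn_le1.
  by split => //; apply: ltnW.
case: HLe => [HL1 HL2]; case: HRe => [HR1 HR2].
case: Hor => H.
  have := HL2 H; lia.
have := HR2 H; lia.
Qed.

Lemma perm_facts n (s : seq nat) : is_perm n s ->
  [/\ size s = n, uniq s & forall v, (v \in s) = (1 <= v <= n)].
Proof.
rewrite /is_perm => P; split.
- by rewrite (perm_size P) size_iota.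
- by rewrite (perm_uniq P) iota_uniq.
- by move=> v; rewrite (perm_mem P) mem_iota; lia.
Qed.

Lemma nth_range n (s : seq nat) i : is_perm n s -> i < n -> 1 <= nth 0 s i <= n.
Proof.
move=> P Hi; case: (perm_facts P) => Hs _ Hm.
by rewrite -Hm mem_nth // Hs.
Qed.

Lemma pos_of n (s : seq nat) v : is_perm n s -> 1 <= v <= n -> exists2 m, m < n & nth 0 s m = v.
Proof.
move=> P Hv; case: (perm_facts P) => Hs _ Hm.
have Hin : v \in s by rewrite Hm.
exists (index v s); first by rewrite -Hs index_mem.
exact: nth_index.
Qed.

Lemma perm_hsw n (s : seq nat) x : is_perm n s -> 1 <= x -> x.+1 <= n -> is_perm n (map (hsw x) s).
Proof.
move=> P H1 H2; case: (perm_facts P) => Hs Us Hm.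
rewrite /is_perm; apply: uniq_perm.
- by rewrite map_inj_uniq //; apply: (can_inj (hswK x)).
- exact: iota_uniq.
move=> v; rewrite -{1}(hswK x v) (mem_map (can_inj (hswK x))) Hm mem_iota.
rewrite /hsw; repeat case: ifP => /eqP ?; lia.
Qed.

Lemma hsw_x x : hsw x x = x.+1.
Proof. by rewrite /hsw eqxx. Qed.
Lemma hsw_x1 x : hsw x x.+1 = x.
Proof. by rewrite /hsw (_ : (x.+1 == x) = false) ?eqxx //; lia. Qed.
Lemma hsw_o x c : (c < x) || (x.+1 < c) -> hsw x c = c.
Proof. by move=> H; rewrite /hsw; repeat case: ifP => /eqP ?; lia. Qed.

Lemma swap_contra n (s : seq nat) x p q : inRC n s -> p < q -> q < n ->
  (nth 0 s p = x /\ nth 0 s q = x.+1) \/ (nth 0 s p = x.+1 /\ nth 0 s q = x) ->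
  (p = 0 \/ (nth 0 s p.-1 < x /\ nth 0 s p = x) \/ (x.+1 < nth 0 s p.-1 /\ nth 0 s p = x.+1)) ->
  (q.+1 = n \/ (x.+1 < nth 0 s q.+1 /\ nth 0 s q = x.+1) \/ (nth 0 s q.+1 < x /\ nth 0 s q = x)) ->
  (0 < p \/ q.+1 < n) -> False.
Proof.
move=> [P Hmax] Hpq Hq Hv HL HR Hor.
case: (perm_facts P) => Hs Us Hm.
have Rp := nth_range P (ltn_trans Hpq Hq).
have Rq := nth_range P Hq.
have Hx1 : 1 <= x by lia.
have Hx2 : x.+1 <= n by lia.
have := Hmax _ (perm_hsw P Hx1 Hx2).
rewrite leqNgt => /negP; apply.
rewrite -Hs in Hq Hor HR.
apply: (tval_swap Us Hpq Hq Hv).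
- case: HL => [->|[[E1 E2]|[E1 E2]]]; [by left | right | right];
  rewrite /fturnh /fturn E2 ?hsw_x ?hsw_x1 hsw_o; try lia;
  case: Hv => -[E3 E4]; rewrite E4 ?hsw_x ?hsw_x1 /turn; lia.
- case: HR => [->|[[E1 E2]|[E1 E2]]]; [by left | right | right];
  rewrite /fturnh /fturn E2 ?hsw_x ?hsw_x1 (hsw_o (c := nth 0 s q.+1)); try lia;
  case: Hv => -[E3 E4]; rewrite E3 ?hsw_x ?hsw_x1 /turn; lia.
- exact: Hor.
Qed.

Definition clok n (s : seq nat) (cl : nat -> nat) :=
  [/\ cl 0 = 1, cl n.-1 = 1 &
   forall i, 0 < i < n.-1 ->
     (cl i = 2 /\ nth 0 s i.-1 < nth 0 s i /\ nth 0 s i.+1 < nth 0 s i) \/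
     (cl i = 0 /\ nth 0 s i < nth 0 s i.-1 /\ nth 0 s i < nth 0 s i.+1)].

Lemma order_adj n (s : seq nat) cl : inRC n s -> clok n s cl ->
  forall a b, a < n -> b < n -> nth 0 s b = (nth 0 s a).+1 -> cl a <= cl b.
Proof.
move=> RC [C0 Cn Ci] a b Ha Hb Eab.
rewrite leqNgt; apply/negP => Hlt.
set x := nth 0 s a.
have Ca : a = 0 \/ a = n.-1 \/ 0 < a < n.-1 by lia.
have Cb : b = 0 \/ b = n.-1 \/ 0 < b < n.-1 by lia.
case: Ca => [Ea|[Ea|Ia]]; case: Cb => [Eb|[Eb|Ib]].
- subst a b; lia.
- subst a b; rewrite C0 Cn in Hlt; lia.
- subst a. rewrite C0 in Hlt; case: (Ci b Ib) => -[Cb [Hb1 Hb2]]; first lia.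
  apply: (@swap_contra n s x 0 b) => //; lia.
- subst a b; rewrite C0 Cn in Hlt; lia.
- subst a b; lia.
- subst a. rewrite Cn in Hlt; case: (Ci b Ib) => -[Cb [Hb1 Hb2]]; first lia.
  apply: (@swap_contra n s x b n.-1) => //; lia.
- subst b. rewrite C0 in Hlt; case: (Ci a Ia) => -[Ca [Ha1 Ha2]]; last lia.
  apply: (@swap_contra n s x 0 a) => //; lia.
- subst b. rewrite Cn in Hlt; case: (Ci a Ia) => -[Ca [Ha1 Ha2]]; last lia.
  apply: (@swap_contra n s x a n.-1) => //; lia.
- case: (Ci a Ia) => -[Ca [Ha1 Ha2]]; last lia.
  case: (Ci b Ib) => -[Cb [Hb1 Hb2]]; first lia.
  case: (ltngtP a b) => Hab; last by subst b; lia.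
  + apply: (@swap_contra n s x a b) => //; lia.
  + apply: (@swap_contra n s x b a) => //; lia.
Qed.

Lemma order_cl n (s : seq nat) cl : inRC n s -> clok n s cl ->
  forall i k, i < n -> k < n -> nth 0 s i < nth 0 s k -> cl i <= cl k.
Proof.
move=> RC CL.
have P := RC.1.
suff H : forall d i k, i < n -> k < n -> nth 0 s k = nth 0 s i + d.+1 -> cl i <= cl k.
  move=> i k Hi Hk Hik; apply: (H (nth 0 s k - nth 0 s i).-1) => //; lia.
elim=> [|d IH] i k Hi Hk E.
  by apply: (order_adj RC CL) => //; lia.
have Rk := nth_range P Hk.
have [m Hm Em] := @pos_of n s (nth 0 s i).+1 P ltac:(lia).
apply: (@leq_trans (cl m)).
  by apply: (order_adj RC CL) => //; lia.
by apply: IH => //; lia.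
Qed.

Lemma sum_count (P : pred nat) (s : seq nat) : \sum_(k < size s) P (nth 0 s k) = count P s.
Proof.
elim: s => [|c s IH]; first by rewrite big_ord0.
by rewrite big_ord_recl /= -IH.
Qed.

Lemma cnt_iota v m a : count (fun y => y < v) (iota a m) = minn (a + m) v - minn a v.
Proof.
elim: m a => [|m IH] a /=; first by rewrite addn0 subnn.
rewrite IH; lia.
Qed.

Lemma count_bounds n (s : seq nat) cl : is_perm n s ->
  (forall i k, i < n -> k < n -> nth 0 s i < nth 0 s k -> cl i <= cl k) ->
  forall i, i < n ->
  \sum_(k < n) (cl k < cl i) < nth 0 s i /\ nth 0 s i <= \sum_(k < n) (cl k <= cl i).
Proof.
move=> P Ord i Hi.
case: (perm_facts P) => Hs Us Hm.
have Rv := nth_range P Hi.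
set v := nth 0 s i.
have EA : \sum_(k < n) (nth 0 s k < v) = v.-1.
  have := sum_count (fun y => y < v) s; rewrite Hs /= => ->.
  rewrite ((permP P) (fun y => y < v)) cnt_iota; lia.
split.
- apply: (@leq_ltn_trans v.-1); last lia.
  rewrite -EA; apply: leq_sum => k _.
  case: (boolP (cl k < cl i)) => // Hc.
  case: (ltngtP (nth 0 s k) v) => // H.
  + have := Ord i k Hi (ltn_ord k) H; lia.
  + have := @nth_inj s k i Us; rewrite Hs => /(_ (ltn_ord k) Hi H) E.
    by subst i; rewrite ltnn in Hc.
- have E1 : v = \sum_(k < n) (nth 0 s k < v) + \sum_(k < n) (k == i :> nat) * 1.
    by rewrite EA (sum_pick (fun _ => 1)) //; lia.
  rewrite E1 -big_split /=; apply: leq_sum => k _.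
  case: (boolP (nth 0 s k < v)) => H.
  + have := Ord k i (ltn_ord k) Hi H => Hc.
    have Hki : (nat_of_ord k == i) = false by apply/negP => /eqP E; subst i; rewrite ltnn in H.
    by rewrite Hki Hc.
  + case: (nat_of_ord k =P i) => [E|] //=; by rewrite E leqnn.
Qed.

Lemma class_vals n (s : seq nat) cl V : is_perm n s ->
  (forall i k, i < n -> k < n -> nth 0 s i < nth 0 s k -> cl i <= cl k) ->
  (forall k, cl k <= 2) ->
  \sum_(k < n) (cl k == 0) = V -> \sum_(k < n) (cl k == 1) = 2 ->
  forall i, i < n ->
   [/\ cl i = 0 -> nth 0 s i <= V, cl i = 1 -> V < nth 0 s i <= V + 2
     & cl i = 2 -> V + 2 < nth 0 s i].
Proof.
move=> P Ord C2 HV H1 i Hi.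
have [B1 B2] := count_bounds P Ord Hi.
have S0 : \sum_(k < n) (cl k <= 0) = V by rewrite -HV; apply: eq_bigr => k _; lia.
have S1 : \sum_(k < n) (cl k <= 1) = V + 2.
  rewrite -HV -H1 -big_split /=; apply: eq_bigr => k _; have := C2 k; lia.
have S0' : \sum_(k < n) (cl k < 1) = V by rewrite -HV; apply: eq_bigr => k _; lia.
have S1' : \sum_(k < n) (cl k < 2) = V + 2 by rewrite -S1.
split => E; rewrite E in B1 B2.
- by rewrite S0 in B2.
- by rewrite S0' in B1; rewrite S1 in B2; lia.
- by rewrite S1' in B1.
Qed.

Lemma sum_par (b : bool) N : \sum_(k < N) (odd k == b) = if b then N./2 else N - N./2.
Proof.
elim: N => [|N IH]; first by rewrite big_ord0; case: b.
rewrite big_ord_recr /= IH; move: IH; case: b => _; lia.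
Qed.

Lemma sum_inner (b : bool) n : 2 <= n ->
  \sum_(k < n) ((k != 0 :> nat) && (k != n.-1 :> nat) && (odd k == b)) =
  \sum_(k < n) (odd k == b) - (false == b) - (odd n.-1 == b).
Proof.
move=> Hn.
have E : \sum_(k < n) (odd k == b) = \sum_(k < n) ((k != 0 :> nat) && (k != n.-1 :> nat) && (odd k == b))
   + \sum_(k < n) (k == 0 :> nat) * (false == b) + \sum_(k < n) (k == n.-1 :> nat) * (odd n.-1 == b).
  rewrite -!big_split /=; apply: eq_bigr => k _.
  case: (nat_of_ord k =P 0) => [->|H0] /=.
    have -> : (0 == n.-1) = false by apply/eqP; lia.
    by case: (false == b).
  rewrite mul0n addn0.
  case: (nat_of_ord k =P n.-1) => [->|H1] /=; [by rewrite add0n mul1n | by rewrite mul0n addn0].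
rewrite E (sum_pick (fun _ => (false == b) : nat)) ?(sum_pick (fun _ => (odd n.-1 == b) : nat)); lia.
Qed.

Definition clb (b : bool) n k := if (k == 0) || (k == n.-1) then 1 else if odd k == b then 0 else 2.

Lemma final_gen n (s : seq nat) (b : bool) : 2 <= n -> inRC n s ->
  (forall k, k.+1 < n -> if odd k == b then nth 0 s k < nth 0 s k.+1 else nth 0 s k.+1 < nth 0 s k) ->
  let V := \sum_(k < n) ((k != 0 :> nat) && (k != n.-1 :> nat) && (odd k == b)) in
  [/\ forall y, (y == nth 0 s 0) || (y == nth 0 s n.-1) = (V < y <= V + 2),
      forall y, (exists2 i, (0 < i < n.-1) && (odd i == b) & nth 0 s i = y) <-> 1 <= y <= V
    & forall y, (exists2 i, (0 < i < n.-1) && (odd i != b) & nth 0 s i = y) <-> V + 2 < y <= n].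
Proof.
move=> Hn RC Hstep V.
have P := RC.1.
have CL : clok n s (clb b n).
  split; first by rewrite /clb eqxx.
    by rewrite /clb eqxx orbT.
  move=> i Hi; rewrite /clb.
  have -> : (i == 0) || (i == n.-1) = false by lia.
  have S1 := Hstep i ltac:(lia).
  have S0 := Hstep i.-1 ltac:(lia).
  have Ei : i.-1.+1 = i by lia.
  rewrite Ei in S0.
  have Op : odd i.-1 = ~~ odd i by lia.
  rewrite Op in S0.
  have F : (~~ odd i == b) = ~~ (odd i == b) by case: (odd i); case: (b).
  rewrite F in S0.
  case: (boolP (odd i == b)) => Hb; [rewrite Hb in S1 S0 * | rewrite (negbTE Hb) in S1 S0 *].
  + right; split => //; lia.
  + left; split => //; lia.
have Ord := order_cl RC CL.
have C2 : forall k, clb b n k <= 2 by move=> k; rewrite /clb; case: ifP => _ //; case: ifP.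
have HV : \sum_(k < n) (clb b n k == 0) = V.
  by apply: eq_bigr => k _; rewrite /clb; case: (nat_of_ord k =P 0); case: (nat_of_ord k =P n.-1); case: (odd k == b).
have H1 : \sum_(k < n) (clb b n k == 1) = 2.
  have -> : 2 = \sum_(k < n) (k == 0 :> nat) * 1 + \sum_(k < n) (k == n.-1 :> nat) * 1.
    by rewrite (sum_pick (fun _ => 1)) ?(sum_pick (fun _ => 1)); lia.
  rewrite -big_split; apply: eq_bigr => k _ /=; rewrite /clb.
  case: (nat_of_ord k =P 0) => [->|?]; first by have -> : (0 == n.-1) = false by apply/eqP; lia.
  case: (nat_of_ord k =P n.-1) => [->|?] //=; by case: (odd k == b).
have CV := class_vals P Ord C2 HV H1.
have Vn : V + 2 <= n.
  have : \sum_(k < n) ((clb b n k == 0) + (clb b n k == 1)) <= \sum_(k < n) 1.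
    by apply: leq_sum => k _; case: (clb b n k) => [|[|]].
  by rewrite big_split /= HV H1 sum1_card card_ord.
have Rg := nth_range P.
split.
- move=> y.
  have [_ A0 _] := CV 0 ltac:(lia).
  have [_ An _] := CV n.-1 ltac:(lia).
  have c0 : clb b n 0 = 1 by rewrite /clb eqxx.
  have cn : clb b n n.-1 = 1 by rewrite /clb eqxx orbT.
  have := A0 c0; have := An cn => h1 h2.
  apply/idP/idP.
    case/orP => /eqP ->; lia.
  move=> Hy; have [m Hm Em] := @pos_of n s y P ltac:(lia).
  have [Am Bm Cm] := CV m Hm.
  move: Am Bm Cm; rewrite /clb.
  case: (m =P 0) => [E|_]; first by rewrite -Em E eqxx.
  case: (m =P n.-1) => [E|_]; first by move=> *; rewrite -Em E eqxx orbT.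
  by case: (odd m == b) => /= h3 h4 h5; [have := h3 erefl | have := h5 erefl]; lia.
- move=> y; split.
    move=> [i /andP [Hi Hb] <-].
    have [Ai _ _] := CV i ltac:(lia).
    have := Rg i ltac:(lia); have : clb b n i = 0.
      rewrite /clb Hb; have -> : (i == 0) || (i == n.-1) = false by lia. by [].
    move/Ai; lia.
  move=> Hy; have [m Hm Em] := @pos_of n s y P ltac:(lia).
  exists m => //.
  have [Am Bm Cm] := CV m Hm.
  move: Am Bm Cm; rewrite /clb.
  case: (m =P 0) => [E|N0] /=; first by move=> _ h _; have := h erefl; lia.
  case: (m =P n.-1) => [E|N1] /=; first by move=> _ h _; have := h erefl; lia.
  case: (odd m == b) => /= h3 h4 h5; last by have := h5 erefl; lia.
  apply/andP; split => //; lia.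
- move=> y; split.
    move=> [i /andP [Hi Hb] <-].
    have [_ _ Ci] := CV i ltac:(lia).
    have := Rg i ltac:(lia); have : clb b n i = 2.
      rewrite /clb (negbTE Hb); have -> : (i == 0) || (i == n.-1) = false by lia. by [].
    move/Ci; lia.
  move=> Hy; have [m Hm Em] := @pos_of n s y P ltac:(lia).
  exists m => //.
  have [Am Bm Cm] := CV m Hm.
  move: Am Bm Cm; rewrite /clb.
  case: (m =P 0) => [E|N0] /=; first by move=> _ h _; have := h erefl; lia.
  case: (m =P n.-1) => [E|N1] /=; first by move=> _ h _; have := h erefl; lia.
  case: (odd m == b) => /= h3 h4 h5; first by have := h3 erefl; lia.
  apply/andP; split => //; lia.
Qed.

Lemma mem_inner_odd n (s : seq nat) y : (y \in inner_odd n s) <->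
  exists2 i, (0 < i < n.-1) && ~~ odd i & nth 0 s i = y.
Proof.
rewrite /inner_odd; split.
- move/mapP => [j]; rewrite mem_filter mem_iota => /andP [Hodd Hj] ->.
  exists j.-1; last by rewrite /pij.
  apply/andP; split; lia.
- move=> [i /andP [Hi He] <-]; apply/mapP; exists i.+1; last by rewrite /pij.
  rewrite mem_filter mem_iota; apply/andP; split; lia.
Qed.

Lemma mem_inner_even n (s : seq nat) y : (y \in inner_even n s) <->
  exists2 i, (0 < i < n.-1) && odd i & nth 0 s i = y.
Proof.
rewrite /inner_even; split.
- move/mapP => [j]; rewrite mem_filter mem_iota => /andP [Hodd Hj] ->.
  exists j.-1; last by rewrite /pij.
  apply/andP; split; lia.
- move=> [i /andP [Hi He] <-]; apply/mapP; exists i.+1; last by rewrite /pij.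
  rewrite mem_filter mem_iota; apply/andP; split; lia.
Qed.

Lemma mem_range a b y : (y \in range a b) = (a <= y <= b).
Proof. rewrite /range mem_iota; lia. Qed.

Lemma mem_ends n (s : seq nat) y : (y \in ends n s) = (y == nth 0 s 0) || (y == nth 0 s n.-1).
Proof. by rewrite /ends /pij mem_seq2. Qed.

Lemma ex_imp (P Q : nat -> bool) (R : nat -> Prop) : (forall i, P i -> Q i) ->
  (exists2 i, P i & R i) -> (exists2 i, Q i & R i).
Proof. by move=> H [i Pi Ri]; exists i => //; apply: H. Qed.

Lemma ex_iff' (P Q : nat -> bool) (R : nat -> Prop) : (forall i, P i = Q i) ->
  (exists2 i, P i & R i) <-> (exists2 i, Q i & R i).
Proof. by move=> H; split => -[i Pi Ri]; exists i => //; [rewrite -H | rewrite H]. Qed.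

Lemma case_gen n (s : seq nat) (b : bool) : 2 <= n -> inRC n s ->
  (forall k, k.+1 < n -> if odd k == b then nth 0 s k < nth 0 s k.+1 else nth 0 s k.+1 < nth 0 s k) ->
  exists V, [/\ V = (if b then n./2 else n - n./2) - (false == b) - (odd n.-1 == b),
    ends n s =i [:: V.+1; V.+2],
    (forall y, (exists2 i, (0 < i < n.-1) && (odd i == b) & nth 0 s i = y) <-> 1 <= y <= V)
  & (forall y, (exists2 i, (0 < i < n.-1) && (odd i != b) & nth 0 s i = y) <-> V + 2 < y <= n)].
Proof.
move=> Hn RC Hstep.
have [E1 E2 E3] := final_gen Hn RC Hstep.
move: E1 E2 E3.
have HV := sum_inner b Hn; rewrite sum_par in HV.
move: (\sum_(k < n) _) HV => V HV E1 E2 E3.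
exists V; split => //.
move=> y; rewrite mem_ends E1 mem_seq2; lia.
Qed.

Lemma alt_step n (s : seq nat) : size s = n -> alternating s ->
  forall k, k.+1 < n -> if odd k == false then nth 0 s k < nth 0 s k.+1 else nth 0 s k.+1 < nth 0 s k.
Proof.
move=> Hs /allP A k Hk.
have := A k; rewrite mem_iota Hs => /(_ ltac:(lia)).
by case: (odd k).
Qed.

Lemma ralt_step n (s : seq nat) : size s = n -> reverse_alternating s ->
  forall k, k.+1 < n -> if odd k == true then nth 0 s k < nth 0 s k.+1 else nth 0 s k.+1 < nth 0 s k.
Proof.
move=> Hs /allP A k Hk.
have := A k; rewrite mem_iota Hs => /(_ ltac:(lia)).
by case: (odd k).
Qed.

Theorem mainTheorem4 (n : nat) (s : seq nat) :
  inRC n s ->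
  [/\ (3 <= n -> odd n -> alternating s ->
        [/\ ends n s =i [:: (n - 1)./2; (n + 1)./2],
            inner_odd n s =i range 1 ((n - 3)./2)
          & inner_even n s =i range ((n + 3)./2) n]),
      (3 <= n -> odd n -> reverse_alternating s ->
        [/\ ends n s =i [:: (n + 1)./2; (n + 3)./2],
            inner_odd n s =i range ((n + 5)./2) n
          & inner_even n s =i range 1 ((n - 1)./2)]),
      (2 <= n -> ~~ odd n -> alternating s ->
        [/\ ends n s =i [:: n./2; n./2 + 1],
            inner_odd n s =i range 1 (n./2 - 1)
          & inner_even n s =i range (n./2 + 2) n])
    & (2 <= n -> ~~ odd n -> reverse_alternating s ->
        [/\ ends n s =i [:: n./2; n./2 + 1],
            inner_odd n s =i range (n./2 + 2) n
          & inner_even n s =i range 1 (n./2 - 1)])].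
Proof.
move=> RC; have [Hs _ _] := perm_facts RC.1.
have Cf : forall m, 2 <= m -> m = n -> alternating s -> exists V,
   [/\ V = (n - n./2) - 1 - (odd n.-1 == false),
    ends n s =i [:: V.+1; V.+2],
    (forall y, y \in inner_odd n s = (1 <= y <= V))
  & (forall y, y \in inner_even n s = (V + 2 < y <= n))].
  move=> m Hm Em Ha; subst m.
  have [V [HV E1 E2 E3]] := case_gen Hm RC (alt_step Hs Ha).
  exists V; split => // y.
  - apply/idP/idP.
      move/mem_inner_odd; rewrite -E2; apply: ex_imp => i; by case: (odd i); rewrite /= ?andbT ?andbF.
    rewrite -E2 => H; apply/mem_inner_odd; move: H; apply: ex_imp => i; by case: (odd i); rewrite /= ?andbT ?andbF.
  - apply/idP/idP.
      move/mem_inner_even; rewrite -E3; apply: ex_imp => i; by case: (odd i); rewrite /= ?andbT ?andbF.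
    rewrite -E3 => H; apply/mem_inner_even; move: H; apply: ex_imp => i; by case: (odd i); rewrite /= ?andbT ?andbF.
have Ct : forall m, 2 <= m -> m = n -> reverse_alternating s -> exists V,
   [/\ V = n./2 - 0 - (odd n.-1 == true),
    ends n s =i [:: V.+1; V.+2],
    (forall y, y \in inner_even n s = (1 <= y <= V))
  & (forall y, y \in inner_odd n s = (V + 2 < y <= n))].
  move=> m Hm Em Ha; subst m.
  have [V [HV E1 E2 E3]] := case_gen Hm RC (ralt_step Hs Ha).
  exists V; split => // y.
  - apply/idP/idP.
      move/mem_inner_even; rewrite -E2; apply: ex_imp => i; by case: (odd i); rewrite /= ?andbT ?andbF.
    rewrite -E2 => H; apply/mem_inner_even; move: H; apply: ex_imp => i; by case: (odd i); rewrite /= ?andbT ?andbF.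
  - apply/idP/idP.
      move/mem_inner_odd; rewrite -E3; apply: ex_imp => i; by case: (odd i); rewrite /= ?andbT ?andbF.
    rewrite -E3 => H; apply/mem_inner_odd; move: H; apply: ex_imp => i; by case: (odd i); rewrite /= ?andbT ?andbF.
split => Hn Ho Ha.
- have [V [HV E1 E2 E3]] := Cf n ltac:(lia) erefl Ha.
  split => y; [rewrite E1 !mem_seq2 | rewrite E2 mem_range | rewrite E3 mem_range]; lia.
- have [V [HV E1 E2 E3]] := Ct n ltac:(lia) erefl Ha.
  split => y; [rewrite E1 !mem_seq2 | rewrite E3 mem_range | rewrite E2 mem_range]; lia.
- have [V [HV E1 E2 E3]] := Cf n ltac:(lia) erefl Ha.
  split => y; [rewrite E1 !mem_seq2 | rewrite E2 mem_range | rewrite E3 mem_range]; lia.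
- have [V [HV E1 E2 E3]] := Ct n ltac:(lia) erefl Ha.
  split => y; [rewrite E1 !mem_seq2 | rewrite E3 mem_range | rewrite E2 mem_range]; lia.
Qed.
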